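(* For a nonzero ring $R$, the following are equivalent: (1) $R$ is local and uniquely weakly $J$-clean; (2) $R$ is uniquely weakly $J$-clean and $0,1$ are the only idempotents of $R$; (3) $R/J(R)\cong\mathbb{Z}_2$ or $R/J(R)\cong\mathbb{Z}_3$.
   Context: All rings are associative with identity; $J(R)$ is the Jacobson radical and $Idem(R)$ the set of idempotents. $R$ is uniquely weakly $J$-clean if for every $x\in R$ there exists a unique $e\in Idem(R)$ with $x-e\in J(R)$ or $x+e\in J(R)$. *)

(* Defs.v *)
From HB Require Import structures.
From mathcomp Require Import all_boot all_order all_algebra.
Set Implicit Arguments. Unset Strict Implicit. Unset Printing Implicit Defensive.
Import GRing.Theory.
Local Open Scope ring_scope.

Definition is_unit (R : nzRingType) (u : R) : Prop :=
  exists v : R, v * u = 1 /\ u * v = 1.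

(* Jacobson radical J(R), via the standard element-wise description:
   x \in J(R) iff 1 - r x is a unit for every r in R. *)
Definition jacobson (R : nzRingType) (x : R) : Prop :=
  forall r : R, is_unit (1 - r * x).

Definition idem (R : nzRingType) (e : R) : Prop := e * e = e.

(* Local ring: R/J(R) is a division ring, i.e. every element outside
   J(R) is a unit. *)
Definition local_ring (R : nzRingType) : Prop :=
  forall x : R, ~ jacobson x -> is_unit x.

Definition uniquely_weakly_J_clean (R : nzRingType) : Prop :=
  forall x : R, exists! e : R,
    idem e /\ (jacobson (x - e) \/ jacobson (x + e)).

(* R/J(R) is isomorphic to the ring S (first isomorphism theorem form):
   there is a surjective ring morphism R -> S whose kernel is J(R). *)
Definition quot_jacobson_iso (R : nzRingType) (S : nzRingType) : Prop :=
  exists f : {rmorphism R -> S},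
    (forall s : S, exists r : R, f r = s) /\
    (forall x : R, f x = 0 <-> jacobson x).

(* Main.v *)
Require Import Defs.
From HB Require Import structures.
From mathcomp Require Import all_boot all_order all_algebra.
From Stdlib Require Import Classical ClassicalEpsilon.
Set Implicit Arguments. Unset Strict Implicit. Unset Printing Implicit Defensive.
Import GRing.Theory.
Local Open Scope ring_scope.

Lemma unitM_ (R : nzRingType) (a b : R) : is_unit a -> is_unit b -> is_unit (a * b).
Proof.
move=> [u [Hu1 Hu2]] [v [Hv1 Hv2]]; exists (v * u); split.
  by rewrite mulrA -(mulrA v) Hu1 mulr1.
by rewrite mulrA -(mulrA a) Hv2 mulr1.
Qed.

Lemma unit_swap (R : nzRingType) (a b : R) : is_unit (1 - a * b) -> is_unit (1 - b * a).
Proof.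
move=> [u [Hu1 Hu2]]; exists (1 + b * u * a); split.
  have key: b * (u * (1 - a*b)) * a = b*u*a - b*u*a*b*a.
    by rewrite mulrBr mulr1 mulrBr mulrBl !mulrA.
  rewrite Hu1 mulr1 in key.
  rewrite mulrDl mul1r mulrBr mulr1 !mulrA -key.
  by rewrite subrK.
have key: b * ((1 - a*b) * u) * a = b*u*a - b*a*b*u*a.
  by rewrite mulrBl mul1r mulrBr mulrBl !mulrA.
rewrite Hu2 mulr1 in key.
rewrite mulrDr mulr1 mulrBl mul1r !mulrA -key.
by rewrite subrK.
Qed.

Lemma J0 (R : nzRingType) : jacobson (0 : R).
Proof. by move=> r; exists 1; rewrite mulr0 subr0 mulr1. Qed.

Lemma JmulL (R : nzRingType) (r x : R) : jacobson x -> jacobson (r * x).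
Proof. by move=> Hx s; rewrite mulrA. Qed.

Lemma JmulR (R : nzRingType) (r x : R) : jacobson x -> jacobson (x * r).
Proof. move=> Hx s; rewrite mulrA; apply: (@unit_swap _ r); rewrite mulrA; exact: Hx. Qed.

Lemma JN (R : nzRingType) (x : R) : jacobson x -> jacobson (- x).
Proof. by move=> Hx s; rewrite mulrN -mulNr. Qed.

Lemma JD (R : nzRingType) (x y : R) : jacobson x -> jacobson y -> jacobson (x + y).
Proof.
move=> Hx Hy r; have [u [Hu1 Hu2]] := Hx r.
have -> : 1 - r * (x + y) = (1 - r * x) * (1 - (u * r) * y).
  by rewrite mulrBr mulr1 !mulrA Hu2 mul1r mulrDr opprD addrA.
by apply: unitM_; [exists u|apply: Hy].
Qed.

Lemma JB (R : nzRingType) (x y : R) : jacobson x -> jacobson y -> jacobson (x - y).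
Proof. by move=> Hx Hy; apply: JD => //; apply: JN. Qed.

Lemma J_unit1 (R : nzRingType) (x : R) : jacobson x -> is_unit (1 - x).
Proof. by move=> Hx; have := Hx 1; rewrite mul1r. Qed.

Lemma J1 (R : nzRingType) : ~ jacobson (1 : R).
Proof.
move=> H; have [v [H1 _]] := J_unit1 H; move: H1; rewrite subrr mulr0.
by move/eqP; rewrite eq_sym oner_eq0.
Qed.

Lemma J_idem (R : nzRingType) (e : R) : jacobson e -> idem e -> e = 0.
Proof.
move=> He Hi; have [v [H1 _]] := J_unit1 He.
have : v * (1 - e) * e = 0 by rewrite -mulrA mulrBl mul1r Hi subrr mulr0.
by rewrite H1 mul1r.
Qed.

Lemma Jeq (R : nzRingType) (a b : R) : jacobson a -> a = b -> jacobson b.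
Proof. by move=> H <-. Qed.

Lemma Jtrans (R : nzRingType) (a b c : R) :
  jacobson (a - b) -> jacobson (b - c) -> jacobson (a - c).
Proof. by move=> H1 H2; apply: Jeq (JD H1 H2) _; rewrite addrA subrK. Qed.

Lemma Jsym (R : nzRingType) (a b : R) : jacobson (a - b) -> jacobson (b - a).
Proof. by move=> H; apply: Jeq (JN H) _; rewrite opprB. Qed.

Lemma modJ (R : nzRingType) (p m : nat) : jacobson (p%:R : R) ->
  jacobson ((m %% p)%:R - m%:R : R).
Proof.
move=> Hp; apply: Jeq (JN (JmulL (m %/ p)%:R Hp)) _.
by rewrite {3}(divn_eq m p) natrD natrM opprD addrC subrK.
Qed.

Definition fZ (R : nzRingType) (n : nat)
  (HE : forall x : R, exists k : 'Z_n.+2, jacobson (x - (val k)%:R)) (x : R) : 'Z_n.+2 :=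
  proj1_sig (constructive_indefinite_description _ (HE x)).

Lemma fZ_spec (R : nzRingType) n HE (x : R) : jacobson (x - (val (@fZ R n HE x))%:R).
Proof. rewrite /fZ; by case: constructive_indefinite_description. Qed.

Definition Zuniq (R : nzRingType) n :=
  forall k k' : 'Z_n.+2, jacobson ((val k)%:R - (val k')%:R : R) -> k = k'.

Lemma fZ_eq (R : nzRingType) n HE (HU : Zuniq R n) (x : R) (k : 'Z_n.+2) :
  jacobson (x - (val k)%:R) -> @fZ R n HE x = k.
Proof. move=> H; apply: HU; apply: Jtrans (Jsym (fZ_spec HE x)) H. Qed.

Lemma fZ_nmod (R : nzRingType) n HE (HU : Zuniq R n) (HP : jacobson ((n.+2)%:R : R)) :
  nmod_morphism (@fZ R n HE).
Proof.
split.
  apply: (@fZ_eq R n HE HU 0 0); apply: Jeq (@J0 R) _; by rewrite /= mulr0n subrr.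
move=> x y; apply: (@fZ_eq R n HE HU).
set a := fZ HE x; set b := fZ HE y.
have H1 : jacobson ((x + y) - ((val a)%:R + (val b)%:R)).
  apply: Jeq (JD (fZ_spec HE x) (fZ_spec HE y)) _.
  by rewrite opprD addrACA.
apply: Jtrans H1 _; rewrite -natrD; apply: Jsym; exact: modJ.
Qed.

Lemma fZ_monoid (R : nzRingType) n HE (HU : Zuniq R n) (HP : jacobson ((n.+2)%:R : R)) :
  monoid_morphism (@fZ R n HE).
Proof.
split.
  by apply: (@fZ_eq R n HE HU); rewrite /= subrr; apply: J0.
move=> x y; apply: (@fZ_eq R n HE HU).
set a := fZ HE x; set b := fZ HE y.
have H1 : jacobson (x * y - (val a)%:R * y).
  by apply: Jeq (JmulR y (fZ_spec HE x)) _; rewrite mulrBl.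
have H2 : jacobson ((val a)%:R * y - (val a)%:R * (val b)%:R).
  by apply: Jeq (JmulL (val a)%:R (fZ_spec HE y)) _; rewrite mulrBr.
apply: Jtrans (Jtrans H1 H2) _; rewrite -natrM; apply: Jsym; exact: modJ.
Qed.

Lemma quotZ (R : nzRingType) n
  (HE : forall x : R, exists k : 'Z_n.+2, jacobson (x - (val k)%:R))
  (HU : Zuniq R n) (HP : jacobson ((n.+2)%:R : R)) : quot_jacobson_iso R 'Z_n.+2.
Proof.
pose f : R -> 'Z_n.+2 := @fZ R n HE.
pose m1 := GRing.isNmodMorphism.Build R 'Z_n.+2 f (fZ_nmod HE HU HP).
pose m2 := GRing.isMonoidMorphism.Build R 'Z_n.+2 f (fZ_monoid HE HU HP).
pose g : {rmorphism R -> 'Z_n.+2} := HB.pack f m1 m2.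
exists g; split.
  move=> s; exists (val s)%:R; apply: (@fZ_eq R n HE HU); rewrite subrr; exact: J0.
move=> x; split.
  move=> Hx; have := fZ_spec HE x; rewrite [fZ HE x]Hx /= subr0 //.
move=> Hx; apply: (@fZ_eq R n HE HU); by rewrite subr0.
Qed.

Lemma Jopp (R : nzRingType) (x : R) : jacobson (- x) -> jacobson x.
Proof. by move=> /JN; rewrite opprK. Qed.

Lemma J1' (R : nzRingType) : ~ jacobson (1%:R : R).
Proof. rewrite mulr1n; exact: J1. Qed.

Lemma Jnat (R : nzRingType) (i j : nat) : jacobson (i%:R - j%:R : R) ->
  jacobson ((i - j)%N%:R : R) /\ jacobson ((j - i)%N%:R : R).
Proof.
move=> H; case: (leqP i j) => hij.
  have -> : (i - j)%N = 0%N by apply/eqP; rewrite subn_eq0.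
  split; first exact: J0.
  by rewrite natrB // -opprB; apply: JN.
have -> : (j - i)%N = 0%N by apply/eqP; rewrite subn_eq0 ltnW.
by split; [rewrite natrB // ltnW | exact: J0].
Qed.

Definition idem01 (R : nzRingType) := forall e : R, idem e -> e = 0 \/ e = 1.

Lemma tri (R : nzRingType) : uniquely_weakly_J_clean R -> idem01 R ->
  forall x : R, jacobson x \/ jacobson (x - 1) \/ jacobson (x + 1).
Proof.
move=> Hu HI x; have [e [[Hi H] _]] := Hu x.
case: (HI e Hi) => He; subst e.
  by left; case: H; rewrite ?subr0 ?addr0.
by right; case: H; [left|right].
Qed.

Lemma unit_m1 (R : nzRingType) (x : R) : jacobson (x - 1) -> is_unit x.
Proof. by move=> H; have := J_unit1 (JN H); rewrite opprK addrC subrK. Qed.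

Lemma unit_p1 (R : nzRingType) (x : R) : jacobson (x + 1) -> is_unit x.
Proof.
move=> H; have := J_unit1 H; rewrite addrC opprD subrK => -[v [H1 H2]].
by exists (- v); split; [rewrite mulNr -mulrN | rewrite mulrN -mulNr].
Qed.

Lemma uniq_build (R : nzRingType) : idem01 R ->
  (forall x : R, exists e, idem e /\ (jacobson (x - e) \/ jacobson (x + e))) ->
  uniquely_weakly_J_clean R.
Proof.
move=> HI HE x; have [e [He H]] := HE x; exists e; split; first by [].
move=> e' [He' H'].
have bad : jacobson x -> jacobson (x - 1) \/ jacobson (x + 1) -> False.
  move=> Hx [] Hx1; apply: J1.
    by apply: Jeq (JB Hx Hx1) _; rewrite opprB addrC subrK.
  by apply: Jeq (JB Hx1 Hx) _; rewrite addrC addKr.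
case: (HI e He) => ?; case: (HI e' He') => ?; subst => //; exfalso.
  by apply: bad => //; case: H; rewrite ?subr0 ?addr0.
by apply: bad => //; case: H'; rewrite ?subr0 ?addr0.
Qed.

Lemma from_quot (R S : nzRingType)
  (HS1 : forall s : S, s * s = s -> s = 0 \/ s = 1)
  (HS2 : forall s : S, s = 0 \/ s = 1 \/ s = -1) :
  quot_jacobson_iso R S -> uniquely_weakly_J_clean R /\ idem01 R.
Proof.
move=> [f [Hs Hk]].
have HI : idem01 R.
  move=> e He; case: (HS1 (f e)); first by rewrite -rmorphM He.
    by move=> Hf; left; apply: J_idem => //; apply/Hk.
  move=> Hf; right.
  have : 1 - e = 0.
    apply: J_idem; first by apply/Hk; rewrite rmorphB rmorph1 Hf subrr.
    by rewrite /idem mulrBl mul1r mulrBr mulr1 He subrr subr0.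
  by move/eqP; rewrite subr_eq0 => /eqP <-.
split => //; apply: uniq_build => // x.
case: (HS2 (f x)) => [Hf|[Hf|Hf]].
- by exists 0; split; [rewrite /idem mulr0 | left; rewrite subr0; apply/Hk].
- exists 1; split; first by rewrite /idem mulr1.
  by left; apply/Hk; rewrite rmorphB rmorph1 Hf subrr.
- exists 1; split; first by rewrite /idem mulr1.
  by right; apply/Hk; rewrite rmorphD rmorph1 Hf addNr.
Qed.

Lemma Z2_1 (s : 'Z_2) : s * s = s -> s = 0 \/ s = 1.
Proof. by case: s => [[|[|//]] Hs] _; [left|right]; apply/val_inj. Qed.

Lemma Z2_2 (s : 'Z_2) : s = 0 \/ s = 1 \/ s = -1.
Proof. by case: s => [[|[|//]] Hs]; [left|right; left]; apply/val_inj. Qed.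

Lemma Z3_1 (s : 'Z_3) : s * s = s -> s = 0 \/ s = 1.
Proof.
case: s => [[|[|[|//]]] Hs] /= H; [left|right|]; try exact/val_inj.
by move: H; move/(congr1 val).
Qed.

Lemma Z3_2 (s : 'Z_3) : s = 0 \/ s = 1 \/ s = -1.
Proof. by case: s => [[|[|[|//]]] Hs]; [left|right; left|right; right]; apply/val_inj. Qed.

Lemma two_eq (R : nzRingType) : (2%:R : R) = 1 + 1.
Proof. by []. Qed.

Lemma three_eq (R : nzRingType) : (3%:R : R) = 2%:R + 1.
Proof. by rewrite (natrD _ 2 1) mulr1n. Qed.

Unset Implicit Arguments.

Theorem mainTheorem13 (R : nzRingType) :
  (local_ring R /\ uniquely_weakly_J_clean R <->
   uniquely_weakly_J_clean R /\ (forall e : R, idem e -> e = 0 \/ e = 1)) /\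
  (uniquely_weakly_J_clean R /\ (forall e : R, idem e -> e = 0 \/ e = 1) <->
   quot_jacobson_iso R 'Z_2 \/ quot_jacobson_iso R 'Z_3).
Proof.
split.
  split.
    move=> [Hl Hu]; split => // e He.
    case: (classic (jacobson e)) => HJ; first by left; apply: J_idem.
    have [v [Hv _]] := Hl e HJ; right.
    have : v * (e * e) = v * e by rewrite He.
    by rewrite mulrA Hv mul1r.
  move=> [Hu HI]; split => // x Hx.
  case: (tri Hu HI x) => [//|[H|H]]; [exact: unit_m1 | exact: unit_p1].
split; last first.
  by case; [apply: from_quot; [exact: Z2_1|exact: Z2_2] | apply: from_quot; [exact: Z3_1|exact: Z3_2]].
move=> [Hu HI]; have T := tri Hu HI.
case: (classic (jacobson (2%:R : R))) => H2.
  left; apply: (@quotZ R 0) => //.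
    move=> x; case: (T x) => [Hx|[Hx|Hx]].
    - by exists 0; rewrite /= mulr0n subr0.
    - by exists 1; rewrite /= mulr1n.
    - exists 1; rewrite /= mulr1n; apply: (Jtrans (b := -1)); first by rewrite opprK.
      by apply: Jeq (JN H2) _; rewrite two_eq opprD.
  move=> k k'; case: k => [[|[|//]] hk]; case: k' => [[|[|//]] hk'] /Jnat [Ha Hb];
    try exact/val_inj; exfalso; by [apply: (J1' Ha)|apply: (J1' Hb)].
right; apply: (@quotZ R 1) => //.
- move=> x; case: (T x) => [Hx|[Hx|Hx]].
  + by exists 0; rewrite /= mulr0n subr0.
  + by exists 1; rewrite /= mulr1n.
  + have H3 : jacobson (3%:R : R).
      case: (T 2%:R) => [//|[H|H]]; last by rewrite three_eq.
      by exfalso; apply: J1; apply: Jeq H _; rewrite two_eq addrK.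
    exists (inZp 2); apply: (Jtrans (b := -1)); first by rewrite opprK.
    by apply: Jeq (JN H3) _; rewrite /= three_eq opprD addrC.
- move=> k k'; case: k => [[|[|[|//]]] hk]; case: k' => [[|[|[|//]]] hk'] /Jnat [Ha Hb];
    try exact/val_inj; exfalso; by [apply: (J1' Ha)|apply: (J1' Hb)|apply: H2 Ha|apply: H2 Hb].
- case: (T 2%:R) => [//|[H|H]]; last by rewrite three_eq.
  by exfalso; apply: J1; apply: Jeq H _; rewrite two_eq addrK.
Qed.
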